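(* Let $k\ge1$ and let $a\ge b\ge0$ be integers with $a+b\le k$. Then $\mathcal{R}^k_{(a,b),(b,a)}=T_1\cup T_2\cup T_3\cup T_4\cup T_5$, and the sets $T_1,\dots,T_5$ are pairwise disjoint. Moreover: - for every weight of the form $(p-2l,p+l)$ or $(p+l,p-2l)$ in $T_1\cup T_2\cup T_3$ (with $p,l$ as in the defining parametrization), $$N^{(k)(p-2l,p+l)}_{(a,b),(b,a)}=N^{(k)(p+l,p-2l)}_{(a,b),(b,a)}=M(p,l);$$ - for every $(p,p)\in T_4\cup T_5$, $N^{(k)(p,p)}_{(a,b),(b,a)}=M(p,0)$, where $$M(p,l)=\min(k,a+b+p-l)-a-b+l-\max(p-b,l)-\max(p-a,l)+1 .$$
   Context: $\widehat{\mathfrak{su}}(3)_k$ fusion. Fix an integer $k\ge1$ and let $P_+^k=\{(\lambda_1,\lambda_2)\in\mathbb{Z}_{\ge0}^2:\lambda_1+\lambda_2\le k\}$. For $\lambda,\mu,\nu\in P_+^k$ set - $\mathcal{A}=\tfrac13[2(\lambda_1+\mu_1+\nu_2)+\lambda_2+\mu_2+\nu_1]$, - $\mathcal{B}=\tfrac13[\lambda_1+\mu_1+\nu_2+2(\lambda_2+\mu_2+\nu_1)]$, - $k_0^{\max}=\min(\mathcal{A},\mathcal{B})$, - $k_0^{\min}=\max(\lambda_1+\lambda_2,\mu_1+\mu_2,\nu_1+\nu_2,\mathcal{A}-\lambda_1,\mathcal{A}-\mu_1,\mathcal{A}-\nu_2,\mathcal{B}-\lambda_2,\mathcal{B}-\mu_2,\mathcal{B}-\nu_1)$.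 The fusion multiplicity is $N^{(k)\nu}_{\lambda,\mu}=\min(k_0^{\max},k)-k_0^{\min}+1$ if $\mathcal{A},\mathcal{B}$ are nonnegative integers, $k_0^{\max}\ge k_0^{\min}$ and $k\ge k_0^{\min}$; otherwise it is $0$. The set $\mathcal{R}^k_{\lambda,\mu}$ is $\{\nu\in P_+^k:N^{(k)\nu}_{\lambda,\mu}\ne0\}$. In the definitions below, $p,l$ range over integers, and each set is empty unless its stated condition holds. - If $b\ge2$ and $k\ge2a+3$: $T_1=\{(p-2l,p+l),(p+l,p-2l):a+2\le p\le\min(a+b,k-a-1,\lfloor2k/3\rfloor,\lfloor(b+k)/2\rfloor),\ \max(1,2p-k)\le l\le\min(p-a-1,\lfloor p/2\rfloor,b)\}$. - If $b\ge1$ and $k\ge a+b+1$: $T_2=\{(p-2l,p+l),(p+l,p-2l):b+1\le p\le\min(a+b,k-a),\ \max(1,p-a)\le l\le\min(p-b,\lfloor p/2\rfloor,b)\}$. - If $b\ge2$ and $k\ge a+b+1$: $T_3=\{(p-2l,p+l),(p+l,p-2l):2\le p\le\min(k-a-1,2b-2),\ \max(1,p-b+1)\le l\le\min(k-a-b,\lfloor p/2\rfloor,b)\}$. - $T_4=\{(p,p):0\le p\le\min(a,k-a)\}$. - If $k\ge2a+2$: $T_5=\{(p,p):a+1\le p\le\min(a+b,\lfloor k/2\rfloor)\}$. *)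

(* Defs.v *)
From Stdlib Require Import ZArith Lia Bool.
Open Scope Z_scope.

Definition weight := (Z * Z)%type.

Definition inP (k : Z) (w : weight) : Prop :=
  0 <= fst w /\ 0 <= snd w /\ fst w + snd w <= k.

(* 3*A and 3*B (so that integrality of A, B is a divisibility test) *)
Definition A3 (l m n : weight) : Z :=
  2 * (fst l + fst m + snd n) + snd l + snd m + fst n.
Definition B3 (l m n : weight) : Z :=
  fst l + fst m + snd n + 2 * (snd l + snd m + fst n).

(* When A3, B3 are divisible by 3, these are A and B. *)
Definition Aw (l m n : weight) : Z := A3 l m n / 3.
Definition Bw (l m n : weight) : Z := B3 l m n / 3.

Definition k0max (l m n : weight) : Z := Z.min (Aw l m n) (Bw l m n).

Definition k0min (l m n : weight) : Z :=
  let A := Aw l m n in let B := Bw l m n in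
  Z.max (fst l + snd l) (Z.max (fst m + snd m) (Z.max (fst n + snd n)
  (Z.max (A - fst l) (Z.max (A - fst m) (Z.max (A - snd n)
  (Z.max (B - snd l) (Z.max (B - snd m) (B - fst n)))))))).

Definition fusionN (k : Z) (l m n : weight) : Z :=
  if (A3 l m n mod 3 =? 0) && (B3 l m n mod 3 =? 0)
     && (0 <=? Aw l m n) && (0 <=? Bw l m n)
     && (k0min l m n <=? k0max l m n) && (k0min l m n <=? k)
  then Z.min (k0max l m n) k - k0min l m n + 1
  else 0.

Definition Rset (k : Z) (l m : weight) (n : weight) : Prop :=
  inP k n /\ fusionN k l m n <> 0.

Definition T1par (k a b p l : Z) : Prop :=
  2 <= b /\ 2 * a + 3 <= k /\
  a + 2 <= p /\ p <= a + b /\ p <= k - a - 1 /\ p <= (2 * k) / 3 /\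
  p <= (b + k) / 2 /\
  1 <= l /\ 2 * p - k <= l /\ l <= p - a - 1 /\ l <= p / 2 /\ l <= b.

Definition T2par (k a b p l : Z) : Prop :=
  1 <= b /\ a + b + 1 <= k /\
  b + 1 <= p /\ p <= a + b /\ p <= k - a /\
  1 <= l /\ p - a <= l /\ l <= p - b /\ l <= p / 2 /\ l <= b.

Definition T3par (k a b p l : Z) : Prop :=
  2 <= b /\ a + b + 1 <= k /\
  2 <= p /\ p <= k - a - 1 /\ p <= 2 * b - 2 /\
  1 <= l /\ p - b + 1 <= l /\ l <= k - a - b /\ l <= p / 2 /\ l <= b.

Definition T4par (k a b p : Z) : Prop :=
  0 <= p /\ p <= a /\ p <= k - a.

Definition T5par (k a b p : Z) : Prop :=
  2 * a + 2 <= k /\ a + 1 <= p /\ p <= a + b /\ p <= k / 2.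

Definition pairset (P : Z -> Z -> Prop) (w : weight) : Prop :=
  exists p l, P p l /\ (w = (p - 2 * l, p + l) \/ w = (p + l, p - 2 * l)).

Definition diagset (P : Z -> Prop) (w : weight) : Prop :=
  exists p, P p /\ w = (p, p).

(* T_1, ..., T_5 indexed by i = 1..5 (other indices: empty) *)
Definition Tset (k a b : Z) (i : nat) : weight -> Prop :=
  match i with
  | 1%nat => pairset (T1par k a b)
  | 2%nat => pairset (T2par k a b)
  | 3%nat => pairset (T3par k a b)
  | 4%nat => diagset (T4par k a b)
  | 5%nat => diagset (T5par k a b)
  | _ => fun _ => False
  end.

Definition Mfun (k a b p l : Z) : Z :=
  Z.min k (a + b + p - l) - a - b + l - Z.max (p - b) l - Z.max (p - a) l + 1.

(* Main.v *)
Require Import Defs.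
From Stdlib Require Import ZArith Lia Bool.
Open Scope Z_scope.
Definition FF (k a b p l : Z) : Z :=
  let A := a + b + p in let B := a + b + p - l in
  let mx := Z.min A B in
  let mn := Z.max (a + b) (Z.max (b + a) (Z.max (p - 2 * l + (p + l))
     (Z.max (A - a) (Z.max (A - b) (Z.max (A - (p + l))
     (Z.max (B - b) (Z.max (B - a) (B - (p - 2 * l))))))))) in
  if (0 <=? A) && (0 <=? B) && (mn <=? mx) && (mn <=? k)
  then Z.min mx k - mn + 1 else 0.
Lemma G_eq mx mn k : (if (mn <=? mx) && (mn <=? k) then Z.min mx k - mn + 1 else 0)
   = Z.max 0 (Z.min mx k - mn + 1).
Proof. destruct (mn <=? mx) eqn:E1; destruct (mn <=? k) eqn:E2; cbn [andb];
  rewrite ?Z.leb_le, ?Z.leb_gt in *; lia. Qed.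
Definition MN3 a b p l := Z.max (a+b+Z.abs l) (Z.max (2*p-l) (a+p+Z.max 0 (-l))).
Lemma mn_eq a b p l : 0 <= b -> b <= a ->
  Z.max (a + b) (Z.max (b + a) (Z.max (p - 2 * l + (p + l))
     (Z.max (a + b + p - a) (Z.max (a + b + p - b) (Z.max (a + b + p - (p + l))
     (Z.max (a + b + p - l - b) (Z.max (a + b + p - l - a) (a + b + p - l - (p - 2 * l))))))))) = MN3 a b p l.
Proof.
  intros. unfold MN3. apply Z.le_antisymm;
  rewrite ?Z.max_lub_iff, ?Z.max_le_iff; lia.
Qed.
Lemma FF_closed k a b p l : 0 <= b -> b <= a ->
  FF k a b p l = Z.max 0 (Z.min (a+b+p - Z.max l 0) k - MN3 a b p l + 1).
Proof.
  intros. unfold FF. cbv zeta. rewrite mn_eq by lia.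
  assert (Hm : a + b <= MN3 a b p l) by (unfold MN3; lia).
  replace (Z.min (a + b + p) (a + b + p - l)) with (a+b+p - Z.max l 0) by lia.
  generalize dependent (MN3 a b p l). intros.
  destruct (0 <=? a + b + p) eqn:E1; destruct (0 <=? a+b+p-l) eqn:E2; cbn [andb];
  rewrite ?G_eq; rewrite ?Z.leb_le, ?Z.leb_gt in *; lia.
Qed.

Lemma fusion_form k a b p l :
  fusionN k (a, b) (b, a) (p - 2 * l, p + l) = FF k a b p l.
Proof.
  unfold fusionN, k0max, k0min, Aw, Bw, A3, B3, FF; cbn [fst snd].
  replace (2 * (a + b + (p + l)) + b + a + (p - 2 * l)) with ((a + b + p) * 3) by ring.
  replace (a + b + (p + l) + 2 * (b + a + (p - 2 * l))) with ((a + b + p - l) * 3) by ring.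
  rewrite !Z_mod_mult, !Z_div_mult by lia. reflexivity.
Qed.

Lemma fusion_form2 k a b p l :
  fusionN k (a, b) (b, a) (p + l, p - 2 * l) = FF k a b (p - l) (- l).
Proof.
  rewrite <- fusion_form. apply f_equal. apply f_equal2; lia.
Qed.

Lemma fusion_form0 k a b p :
  fusionN k (a, b) (b, a) (p, p) = FF k a b p 0.
Proof.
  rewrite <- fusion_form. apply f_equal. apply f_equal2; lia.
Qed.

Lemma fusion_nz k a b nu : fusionN k (a, b) (b, a) nu <> 0 ->
  exists p l, nu = (p - 2 * l, p + l).
Proof.
  destruct nu as [n1 n2]. unfold fusionN, A3; cbn [fst snd].
  destruct ((2 * (a + b + n2) + b + a + n1) mod 3 =? 0) eqn:E; cbn [andb]; [|intro H; exfalso; apply H; reflexivity].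
  intros _. apply Z.eqb_eq in E.
  assert (H : n2 - n1 = 3 * ((n2 - n1) / 3)) by (Z.div_mod_to_equations; lia).
  exists (n2 - (n2 - n1) / 3), ((n2 - n1) / 3). f_equal; lia.
Qed.

Definition T1L k a b p l := 2 <= b /\ 2 * a + 3 <= k /\
  a + 2 <= p /\ p <= a + b /\ p <= k - a - 1 /\ 3 * p <= 2 * k /\
  2 * p <= b + k /\
  1 <= l /\ 2 * p - k <= l /\ l <= p - a - 1 /\ 2 * l <= p /\ l <= b.
Definition T2L k a b p l := 1 <= b /\ a + b + 1 <= k /\
  b + 1 <= p /\ p <= a + b /\ p <= k - a /\
  1 <= l /\ p - a <= l /\ l <= p - b /\ 2 * l <= p /\ l <= b.
Definition T3L k a b p l := 2 <= b /\ a + b + 1 <= k /\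
  2 <= p /\ p <= k - a - 1 /\ p <= 2 * b - 2 /\
  1 <= l /\ p - b + 1 <= l /\ l <= k - a - b /\ 2 * l <= p /\ l <= b.
Definition T5L k a b p := 2 * a + 2 <= k /\ a + 1 <= p /\ p <= a + b /\ 2 * p <= k.

Lemma T1E k a b p l : T1par k a b p l <-> T1L k a b p l.
Proof. unfold T1par, T1L. split; intros; Z.div_mod_to_equations; lia. Qed.
Lemma T2E k a b p l : T2par k a b p l <-> T2L k a b p l.
Proof. unfold T2par, T2L. split; intros; Z.div_mod_to_equations; lia. Qed.
Lemma T3E k a b p l : T3par k a b p l <-> T3L k a b p l.
Proof. unfold T3par, T3L. split; intros; Z.div_mod_to_equations; lia. Qed.
Lemma T5E k a b p : T5par k a b p <-> T5L k a b p.
Proof. unfold T5par, T5L. split; intros; Z.div_mod_to_equations; lia. Qed.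


Definition H k a b p l :=
  Z.max 0 (Z.min (a+b+p-l) k - Z.max (a+b+l) (Z.max (2*p-l) (a+p)) + 1).

Lemma FF_pos k a b p l : 0 <= b -> b <= a -> 0 <= l -> FF k a b p l = H k a b p l.
Proof.
  intros. rewrite FF_closed by lia. unfold MN3, H.
  rewrite Z.abs_eq, (Z.max_l l 0), (Z.max_l 0 (-l)) by lia.
  lia.
Qed.

Lemma FF_neg k a b p l : 0 <= b -> b <= a -> 0 <= l -> FF k a b (p - l) (-l) = H k a b p l.
Proof.
  intros. rewrite FF_closed by lia. unfold MN3, H.
  rewrite Z.abs_neq, (Z.max_r (-l) 0), (Z.max_r 0 (- - l)) by lia.
  lia.
Qed.

Lemma H_spec k a b p l : 1 <= k -> 0 <= b -> b <= a -> a + b <= k ->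
  (T1L k a b p l \/ T2L k a b p l \/ T3L k a b p l) ->
  H k a b p l = Mfun k a b p l.
Proof. intros. unfold H, Mfun, T1L, T2L, T3L in *. lia. Qed.

Lemma H_spec0 k a b p : 1 <= k -> 0 <= b -> b <= a -> a + b <= k ->
  (T4par k a b p \/ T5L k a b p) -> H k a b p 0 = Mfun k a b p 0.
Proof. intros. unfold H, Mfun, T4par, T5L in *. lia. Qed.

Lemma M_pos k a b p l : 1 <= k -> 0 <= b -> b <= a -> a + b <= k ->
  (T1L k a b p l \/ T2L k a b p l \/ T3L k a b p l) -> 1 <= Mfun k a b p l.
Proof. intros. unfold Mfun, T1L, T2L, T3L in *. lia. Qed.

Lemma M_pos0 k a b p : 1 <= k -> 0 <= b -> b <= a -> a + b <= k ->
  (T4par k a b p \/ T5L k a b p) -> 1 <= Mfun k a b p 0.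
Proof. intros. unfold Mfun, T4par, T5L in *. lia. Qed.

Lemma H_nz k a b p l : H k a b p l <> 0 ->
  a+b+l <= a+b+p-l /\ 2*p-l <= a+b+p-l /\ a+p <= a+b+p-l /\
  a+b+l <= k /\ 2*p-l <= k /\ a+p <= k.
Proof. unfold H. intros. lia. Qed.

Lemma forward k a b p l : 1 <= k -> 0 <= b -> b <= a -> a + b <= k -> 0 <= l ->
  0 <= p - 2 * l -> 0 <= p + l -> 2 * p - l <= k -> H k a b p l <> 0 ->
  (0 < l /\ (T1L k a b p l \/ T2L k a b p l \/ T3L k a b p l)) \/
  (l = 0 /\ (T4par k a b p \/ T5L k a b p)).
Proof.
  intros H1 H2 H3 H4 H5 H6 H7 H8 Hn. apply H_nz in Hn. clear H8.
  unfold T1L, T2L, T3L, T4par, T5L.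
  destruct (Z.eq_dec l 0) as [->|Hl].
  - right. split; [reflexivity|]. destruct (Z_le_gt_dec p a); [left|right]; lia.
  - left. split; [lia|].
    destruct (Z_le_gt_dec l (p - b)).
    + destruct (Z_le_gt_dec (p - a) l).
      * right; left; lia.
      * left; lia.
    + right; right; lia.
Qed.

Theorem mainTheorem4 (k a b : Z) :
  1 <= k -> 0 <= b -> b <= a -> a + b <= k ->
  (forall nu : weight,
     Rset k (a, b) (b, a) nu <->
     (Tset k a b 1 nu \/ Tset k a b 2 nu \/ Tset k a b 3 nu \/
      Tset k a b 4 nu \/ Tset k a b 5 nu)) /\
  (forall (i j : nat) (nu : weight),
     (1 <= i <= 5)%nat -> (1 <= j <= 5)%nat -> i <> j ->
     ~ (Tset k a b i nu /\ Tset k a b j nu)) /\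
  (forall p l : Z,
     T1par k a b p l \/ T2par k a b p l \/ T3par k a b p l ->
     fusionN k (a, b) (b, a) (p - 2 * l, p + l) = Mfun k a b p l /\
     fusionN k (a, b) (b, a) (p + l, p - 2 * l) = Mfun k a b p l) /\
  (forall p : Z,
     T4par k a b p \/ T5par k a b p ->
     fusionN k (a, b) (b, a) (p, p) = Mfun k a b p 0).
Proof.
  intros Hk Hb Hba Hab.
  assert (P3 : forall p l : Z,
     T1par k a b p l \/ T2par k a b p l \/ T3par k a b p l ->
     fusionN k (a, b) (b, a) (p - 2 * l, p + l) = Mfun k a b p l /\
     fusionN k (a, b) (b, a) (p + l, p - 2 * l) = Mfun k a b p l).
  { intros p l HT. rewrite T1E, T2E, T3E in HT.
    assert (0 <= l) by (unfold T1L, T2L, T3L in HT; lia).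
    rewrite fusion_form, fusion_form2, FF_pos, FF_neg by lia.
    rewrite H_spec by assumption. split; reflexivity. }
  assert (P4 : forall p : Z,
     T4par k a b p \/ T5par k a b p ->
     fusionN k (a, b) (b, a) (p, p) = Mfun k a b p 0).
  { intros p HT. rewrite T5E in HT.
    rewrite fusion_form0, FF_pos by lia. apply H_spec0; assumption. }
  split; [|split; [|split; assumption]].
  - intros nu. split.
    + intros [HP Hne].
      destruct (fusion_nz _ _ _ _ Hne) as [p [l ->]].
      rewrite fusion_form in Hne. unfold inP in HP; cbn [fst snd] in HP.
      destruct (Z_le_gt_dec 0 l).
      * rewrite FF_pos in Hne by lia.
        destruct (forward k a b p l) as [[_ [T|[T|T]]]|[-> [T|T]]]; try lia.
        -- left. exists p, l. split; [apply T1E; exact T | left; reflexivity].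
        -- right; left. exists p, l. split; [apply T2E; exact T | left; reflexivity].
        -- right; right; left. exists p, l. split; [apply T3E; exact T | left; reflexivity].
        -- right; right; right; left. exists p. split; [exact T | f_equal; lia].
        -- right; right; right; right. exists p. split; [apply T5E; exact T | f_equal; lia].
      * assert (E : FF k a b p l = H k a b (p - l) (- l)).
        { rewrite <- FF_neg by lia. f_equal; ring. }
        rewrite E in Hne.
        destruct (forward k a b (p - l) (- l)) as [[_ [T|[T|T]]]|[? _]]; try lia.
        -- left. exists (p - l), (- l). split; [apply T1E; exact T | right; f_equal; ring].
        -- right; left. exists (p - l), (- l). split; [apply T2E; exact T | right; f_equal; ring].
        -- right; right; left. exists (p - l), (- l). split; [apply T3E; exact T | right; f_equal; ring].
    + intros HT.
      destruct HT as [T|[T|[T|[T|T]]]]; cbn [Tset] in T.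
      1-3: destruct T as [p [l [Hp [-> | ->]]]];
        (assert (HPP : T1par k a b p l \/ T2par k a b p l \/ T3par k a b p l) by tauto);
        pose proof (P3 p l HPP) as [E1 E2];
        rewrite T1E, T2E, T3E in HPP;
        pose proof (M_pos k a b p l Hk Hb Hba Hab HPP);
        unfold T1L, T2L, T3L in HPP;
        (split; [unfold inP; cbn [fst snd]; lia | lia]).
      1-2: destruct T as [p [Hp ->]];
        (assert (HPP : T4par k a b p \/ T5par k a b p) by tauto);
        pose proof (P4 p HPP) as E1;
        rewrite T5E in HPP;
        pose proof (M_pos0 k a b p Hk Hb Hba Hab HPP);
        unfold T4par, T5L in HPP;
        (split; [unfold inP; cbn [fst snd]; lia | lia]).
  - intros i j nu Hi Hj Hij [Ti Tj].
    destruct i as [|[|[|[|[|[|i]]]]]]; try lia;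
    destruct j as [|[|[|[|[|[|j]]]]]]; try lia;
    cbn [Tset] in Ti, Tj;
    unfold pairset, diagset in Ti, Tj;
    repeat match goal with
           | H : exists _, _ |- _ => destruct H
           | H : _ /\ _ |- _ => destruct H
           | H : T1par _ _ _ _ _ |- _ => apply T1E in H; unfold T1L in H
           | H : T2par _ _ _ _ _ |- _ => apply T2E in H; unfold T2L in H
           | H : T3par _ _ _ _ _ |- _ => apply T3E in H; unfold T3L in H
           | H : T5par _ _ _ _ |- _ => apply T5E in H; unfold T5L in H
           | H : T4par _ _ _ _ |- _ => unfold T4par in H
           end;
    repeat match goal with
           | H : _ \/ _ |- _ => destruct H
           end;
    subst nu;
    repeat match goal with
           | H : (?x, ?y) = (?u, ?v) |- _ =>
               pose proof (f_equal fst H : x = u); pose proof (f_equal snd H : y = v); clear H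
           end; lia.
Qed.
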